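(* Let $(B,\sqsubseteq)$ be an ordered functor with a cofree comonad, let $\Sigma$ be a functor with a free monad, and suppose $\sqsubseteq_{B\Sigma^*\emptyset}$ makes $B\Sigma^*\emptyset$ a pointed DCPO (a partial order with a least element in which every directed subset has a supremum). Then every monotone biGSOS specification $\rho\colon\Sigma B^\infty\Rightarrow B\Sigma^*$ has a least supported model, i.e. there is a supported model $f$ such that $f(t)\sqsubseteq_{B\Sigma^*\emptyset} g(t)$ for every supported model $g$ and every $t\in\Sigma^*\emptyset$.
   Context: An ordered functor $(B,\sqsubseteq)$ is a functor $B\colon\mathsf{Set}\to\mathsf{Set}$ together with a preorder $\sqsubseteq_{BX}$ on $BX$ for every set $X$, such that $Bf$ is monotone for every function $f$. Relation lifting: for $R\subseteq X\times Y$ with projections $\pi_1,\pi_2$ and any functor $F$, $\mathsf{Rel}(F)(R)=\{(b,c)\in FX\times FY\mid\exists d\in FR.\ F\pi_1(d)=b,\ F\pi_2(d)=c\}$; $\mathsf{Rel}_{\sqsubseteq}(B)(R)=\{(b,c)\mid\exists b',c'.\ b\sqsubseteq b',\ (b',c')\in\mathsf{Rel}(B)(R),\ c'\sqsubseteq c\}$. For coalgebras $f\colon X\to BX$, $g\colon Y\to BY$, $R\subseteq X\times Y$ is a simulation if $(f(x),g(y))\in\mathsf{Rel}_{\sqsubseteq}(B)(R)$ for all $(x,y)\in R$; similarity is the greatest simulation. Cofree comonad: for each set $X$, $\theta_X\colon B^\infty X\to BB^\infty X$, $\epsilon_X\colon B^\infty X\to X$ with $\langle\theta_X,\epsilon_X\rangle$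 a final $B(-)\times X$-coalgebra; for $f\colon X\to BX$, $f^\infty\colon X\to B^\infty X$ is the unique coalgebra morphism from $\langle f,\mathrm{id}_X\rangle$ to $\langle\theta_X,\epsilon_X\rangle$. The functor $B(-)\times X$ is ordered by $(b,x)\,\widetilde\sqsubseteq\,(c,y)$ iff $b\sqsubseteq c$ and $x=y$; $\lesssim_{B^\infty X}$ is the similarity of $\langle\theta_X,\epsilon_X\rangle$ with itself w.r.t. this order. Free monad: for each set $X$, $\iota_X\colon\Sigma\Sigma^*X\to\Sigma^*X$, $\eta_X\colon X\to\Sigma^*X$ with $[\iota_X,\eta_X]$ an initial algebra for $\Sigma(-)+X$; $\mu_X\colon\Sigma^*\Sigma^*X\to\Sigma^*X$ is the unique map with $\mu_X\circ\eta_{\Sigma^*X}=\mathrm{id}$ and $\mu_X\circ\iota_{\Sigma^*X}=\iota_X\circ\Sigma\mu_X$. A biGSOS specification is a natural transformation $\rho\colon\Sigma B^\infty\Rightarrow B\Sigma^*$. It is monotone if for every set $X$ and all $u,v\in\Sigma B^\infty X$ with $(u,v)\in\mathsf{Rel}(\Sigma)(\lesssim_{B^\infty X})$ we have $\rho_X(u)\sqsubseteq_{B\Sigma^*X}\rho_X(v)$. A supported model of $\rho$ is a function $f\colon\Sigma^*\emptyset\to B\Sigma^*\emptyset$ such that $f\circ\iota_\emptyset=B\mu_\emptyset\circ\rho_{\Sigma^*\emptyset}\circ\Sigma f^\infty$. *)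

(* Defs.v *)
(* Sets are modelled by Types, functions by
   Rocq functions; equalities of functions are stated pointwise. *)
From Stdlib Require Import Relations.


Record Functor := {
  fobj :> Type -> Type;
  fmap : forall X Y : Type, (X -> Y) -> fobj X -> fobj Y;
  fmap_id : forall X (b : fobj X), fmap X X (fun x : X => x) b = b;
  fmap_comp : forall X Y Z (f : X -> Y) (g : Y -> Z) (b : fobj X),
      fmap X Z (fun x => g (f x)) b = fmap Y Z g (fmap X Y f b)
}.

Arguments fmap _ {X Y} _ _.

Record OrderedFunctor := {
  ofun :> Functor;
  ord : forall X : Type, ofun X -> ofun X -> Prop;
  ord_preorder : forall X, preorder (ofun X) (@ord X);
  fmap_mono : forall X Y (f : X -> Y) (b c : ofun X),
      ord X b c -> ord Y (fmap ofun f b) (fmap ofun f c)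
}.

Arguments ord _ {X} _ _.

Definition RelLift (F : Type -> Type)
  (Fmap : forall X Y : Type, (X -> Y) -> F X -> F Y)
  (X Y : Type) (R : X -> Y -> Prop) (b : F X) (c : F Y) : Prop :=
  exists d : F {p : X * Y | R (fst p) (snd p)},
    Fmap _ _ (fun p => fst (proj1_sig p)) d = b /\
    Fmap _ _ (fun p => snd (proj1_sig p)) d = c.

Definition RelLiftOrd (F : Type -> Type)
  (Fmap : forall X Y : Type, (X -> Y) -> F X -> F Y)
  (Ford : forall X : Type, F X -> F X -> Prop)
  (X Y : Type) (R : X -> Y -> Prop) (b : F X) (c : F Y) : Prop :=
  exists (b' : F X) (c' : F Y),
    Ford X b b' /\ RelLift F Fmap X Y R b' c' /\ Ford Y c' c.

Definition is_simulation (F : Type -> Type)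
  (Fmap : forall X Y : Type, (X -> Y) -> F X -> F Y)
  (Ford : forall X : Type, F X -> F X -> Prop)
  (X Y : Type) (f : X -> F X) (g : Y -> F Y) (R : X -> Y -> Prop) : Prop :=
  forall x y, R x y -> RelLiftOrd F Fmap Ford X Y R (f x) (g y).

Definition similarity (F : Type -> Type)
  (Fmap : forall X Y : Type, (X -> Y) -> F X -> F Y)
  (Ford : forall X : Type, F X -> F X -> Prop)
  (X Y : Type) (f : X -> F X) (g : Y -> F Y) (x : X) (y : Y) : Prop :=
  exists R : X -> Y -> Prop, is_simulation F Fmap Ford X Y f g R /\ R x y.

(** * Cofree comonad: for each X a final B(-) x X coalgebra <theta_X, eps_X> *)
Record CofreeComonad (B : Functor) := {
  Binf : Type -> Type;
  theta : forall X, Binf X -> B (Binf X);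
  eps : forall X, Binf X -> X;
  unfold : forall (X C : Type), (C -> B C * X) -> C -> Binf X;
  unfold_theta : forall X C (c : C -> B C * X) (z : C),
      theta X (unfold X C c z) = fmap B (unfold X C c) (fst (c z));
  unfold_eps : forall X C (c : C -> B C * X) (z : C),
      eps X (unfold X C c z) = snd (c z);
  unfold_unique : forall X C (c : C -> B C * X) (h : C -> Binf X),
      (forall z, theta X (h z) = fmap B h (fst (c z))) ->
      (forall z, eps X (h z) = snd (c z)) ->
      forall z, h z = unfold X C c z
}.

Arguments Binf {B} _ _.
Arguments theta {B} _ {X} _.
Arguments eps {B} _ {X} _.
Arguments unfold {B} _ {X C} _ _.

Definition Binf_map (B : Functor) (cf : CofreeComonad B) (X Y : Type)
  (h : X -> Y) : Binf cf X -> Binf cf Y :=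
  unfold cf (fun t : Binf cf X => (theta cf t, h (eps cf t))).
Arguments Binf_map {B} cf {X Y} h _.

Definition coinf (B : Functor) (cf : CofreeComonad B) (X : Type)
  (f : X -> B X) : X -> Binf cf X :=
  unfold cf (fun x : X => (f x, x)).
Arguments coinf {B} cf {X} f _.

Definition BX_obj (B : Functor) (X : Type) (Y : Type) : Type := (B Y * X)%type.
Definition BX_map (B : Functor) (X : Type) (Y Z : Type) (h : Y -> Z)
  (p : BX_obj B X Y) : BX_obj B X Z := (fmap B h (fst p), snd p).
Definition BX_ord (B : OrderedFunctor) (X : Type) (Y : Type)
  (p q : BX_obj B X Y) : Prop := ord B (fst p) (fst q) /\ snd p = snd q.

Definition sim_Binf (B : OrderedFunctor) (cf : CofreeComonad B) (X : Type)
  : Binf cf X -> Binf cf X -> Prop :=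
  similarity (BX_obj B X) (BX_map B X) (BX_ord B X) (Binf cf X) (Binf cf X)
    (fun t : Binf cf X => (theta cf t, eps cf t))
    (fun t : Binf cf X => (theta cf t, eps cf t)).

(** * Free monad: for each X an initial Sigma(-) + X algebra [iota_X, eta_X] *)
Record FreeMonad (S : Functor) := {
  Sstar : Type -> Type;
  iota : forall X, S (Sstar X) -> Sstar X;
  eta : forall X, X -> Sstar X;
  fold : forall (X A : Type), (S A -> A) -> (X -> A) -> Sstar X -> A;
  fold_iota : forall X A (a : S A -> A) (b : X -> A) (s : S (Sstar X)),
      fold X A a b (iota X s) = a (fmap S (fold X A a b) s);
  fold_eta : forall X A (a : S A -> A) (b : X -> A) (x : X),
      fold X A a b (eta X x) = b x;
  fold_unique : forall X A (a : S A -> A) (b : X -> A) (h : Sstar X -> A),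
      (forall s, h (iota X s) = a (fmap S h s)) ->
      (forall x, h (eta X x) = b x) ->
      forall t, h t = fold X A a b t
}.

Arguments Sstar {S} _ _.
Arguments iota {S} _ {X} _.
Arguments eta {S} _ {X} _.
Arguments fold {S} _ {X A} _ _ _.

Definition Sstar_map (S : Functor) (m : FreeMonad S) (X Y : Type)
  (h : X -> Y) : Sstar m X -> Sstar m Y :=
  fold m (fun u => iota m u) (fun x => eta m (h x)).
Arguments Sstar_map {S} m {X Y} h _.

Definition mu (S : Functor) (m : FreeMonad S) (X : Type)
  : Sstar m (Sstar m X) -> Sstar m X :=
  fold m (fun u => iota m u) (fun t => t).
Arguments mu {S} m {X} _.

Definition biGSOS (S : Functor) (B : Functor) (cf : CofreeComonad B)
  (m : FreeMonad S) : Type :=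
  forall X : Type, S (Binf cf X) -> B (Sstar m X).
Arguments biGSOS S {B} cf m.

Definition natural (S : Functor) (B : Functor) (cf : CofreeComonad B)
  (m : FreeMonad S) (rho : biGSOS S cf m) : Prop :=
  forall (X Y : Type) (h : X -> Y) (u : S (Binf cf X)),
    fmap B (Sstar_map m h) (rho X u) = rho Y (fmap S (Binf_map cf h) u).
Arguments natural {S B cf m} rho.

Definition monotone_spec (S : Functor) (B : OrderedFunctor)
  (cf : CofreeComonad B) (m : FreeMonad S) (rho : biGSOS S cf m) : Prop :=
  forall (X : Type) (u v : S (Binf cf X)),
    RelLift S (fun A C => @fmap S A C) (Binf cf X) (Binf cf X) (sim_Binf B cf X) u v ->
    ord B (rho X u) (rho X v).
Arguments monotone_spec {S B cf m} rho.

Definition supported_model (S : Functor) (B : Functor)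
  (cf : CofreeComonad B) (m : FreeMonad S) (rho : biGSOS S cf m)
  (f : Sstar m Empty_set -> B (Sstar m Empty_set)) : Prop :=
  forall s : S (Sstar m Empty_set),
    f (iota m s) =
    fmap B (mu m)
      (rho (Sstar m Empty_set) (fmap S (coinf cf f) s)).
Arguments supported_model {S B cf m} rho f.

Definition directed (P : Type) (le : P -> P -> Prop) (D : P -> Prop) : Prop :=
  (exists d, D d) /\
  forall x y, D x -> D y -> exists z, D z /\ le x z /\ le y z.
Arguments directed {P} le D.

Definition is_sup (P : Type) (le : P -> P -> Prop) (D : P -> Prop) (s : P)
  : Prop :=
  (forall d, D d -> le d s) /\ (forall u, (forall d, D d -> le d u) -> le s u).
Arguments is_sup {P} le D s.

Definition pointed_dcpo (P : Type) (le : P -> P -> Prop) : Prop :=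
  order P le /\
  (exists bot : P, forall x, le bot x) /\
  (forall D : P -> Prop, directed le D -> exists s, is_sup le D s).

(* Main.v *)
Require Import Defs.
From Stdlib Require Import Relations FunctionalExtensionality ClassicalEpsilon.

Section Pataraia.
Variable P : Type.
Variable le : P -> P -> Prop.
Hypothesis Hd : pointed_dcpo P le.
Variable Phi : P -> P.
Hypothesis Phimono : forall x y, le x y -> le (Phi x) (Phi y).

Lemma pataraia : exists mm, Phi mm = mm /\ forall y, le (Phi y) y -> le mm y.
Proof.
  destruct Hd as [Hord [[bot Hbot] Hsup]].
  destruct Hord as [Hrefl Htrans Hanti].
  set (Q := fun x => le x (Phi x) /\ forall y, le (Phi y) y -> le x y).
  assert (Qsup : forall D, (forall d, D d -> Q d) -> forall s, is_sup le D s -> Q s).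
  { intros D HD s [Hub Hl]. split.
    - apply Hl. intros d Hdd. destruct (HD d Hdd) as [H1 _].
      eapply Htrans; [exact H1|]. apply Phimono. apply Hub; auto.
    - intros y Hy. apply Hl. intros d Hdd. apply (proj2 (HD d Hdd)); auto. }
  assert (QPhi : forall x, Q x -> Q (Phi x)).
  { intros x [H1 H2]. split.
    - apply Phimono; auto.
    - intros y Hy. eapply Htrans; [apply Phimono; apply H2; exact Hy| exact Hy]. }
  set (M := fun k : P -> P => (forall x, Q x -> Q (k x)) /\
     (forall x y, Q x -> Q y -> le x y -> le (k x) (k y)) /\
     (forall x, Q x -> le x (k x))).
  assert (Mid : M (fun x => x)).
  { split; [|split]; auto. }
  set (Dx := fun x z => exists k, M k /\ z = k x).
  assert (Ddir : forall x, Q x -> directed le (Dx x)).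
  { intros x Qx. split.
    - exists x. exists (fun x => x). auto.
    - intros a b [k1 [[M1a [M1b M1c]] ->]] [k2 [[M2a [M2b M2c]] ->]].
      exists (k1 (k2 x)). split; [|split].
      + exists (fun z => k1 (k2 z)). split; auto.
        split; [|split]; auto.
        intros z Qz. eapply Htrans; [apply M2c; auto|]. apply M1c; auto.
      + apply M1b; auto.
      + apply M1c; auto. }
  assert (inh : inhabited P) by exact (inhabits bot).
  set (top := fun x => epsilon inh (fun s => is_sup le (Dx x) s)).
  assert (topsup : forall x, Q x -> is_sup le (Dx x) (top x)).
  { intros x Qx. unfold top. apply epsilon_spec. apply Hsup. apply Ddir; auto. }
  assert (DxQ : forall x, Q x -> forall d, Dx x d -> Q d).
  { intros x Qx d [k [[Ma _] ->]]. auto. }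
  assert (Qtop : forall x, Q x -> Q (top x)).
  { intros x Qx. eapply Qsup; [|apply topsup; auto]. apply DxQ; auto. }
  assert (Mtop : M top).
  { split; [|split]; auto.
    - intros x y Qx Qy Hxy. apply (proj2 (topsup x Qx)).
      intros d [k [[Ma [Mb Mc]] ->]]. eapply Htrans; [apply Mb; eauto|].
      apply (proj1 (topsup y Qy)). exists k. split; auto. split; auto.
    - intros x Qx. apply (proj1 (topsup x Qx)). exists (fun x => x). auto. }
  assert (MPt : M (fun x => Phi (top x))).
  { destruct Mtop as [Ta [Tb Tc]]. split; [|split].
    - intros x Qx. apply QPhi; auto.
    - intros x y Qx Qy H. apply Phimono; auto.
    - intros x Qx. eapply Htrans; [apply Tc; auto|]. apply (proj1 (Ta x Qx)). }
  assert (Qbot : Q bot). { split; auto. }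
  exists (top bot). destruct (Qtop bot Qbot) as [H1 H2]. split; auto.
  apply Hanti; auto. apply (proj1 (topsup bot Qbot)). exists (fun x => Phi (top x)). auto.
Qed.
End Pataraia.

Lemma pointwise_dcpo (T P : Type) (le : P -> P -> Prop) :
  pointed_dcpo P le -> pointed_dcpo (T -> P) (fun f g => forall t, le (f t) (g t)).
Proof.
  intros [[Hrefl Htrans Hanti] [[bot Hbot] Hsup]].
  split; [split|split].
  - intros f t; apply Hrefl.
  - intros f g h H1 H2 t; eapply Htrans; eauto.
  - intros f g H1 H2; apply functional_extensionality; intros t; apply Hanti; auto.
  - exists (fun _ => bot). auto.
  - intros D [[d0 Hd0] Hdir].
    assert (Ht : forall t, exists s, is_sup le (fun z => exists h, D h /\ z = h t) s).
    { intros t. apply Hsup. split.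
      - exists (d0 t). eauto.
      - intros a b [h1 [D1 ->]] [h2 [D2 ->]].
        destruct (Hdir h1 h2 D1 D2) as [z [Dz [L1 L2]]].
        exists (z t). eauto. }
    exists (fun t => proj1_sig (constructive_indefinite_description _ (Ht t))).
    split.
    + intros d Dd t. destruct (constructive_indefinite_description _ (Ht t)) as [s [Hs1 Hs2]].
      simpl. apply Hs1. eauto.
    + intros u Hu t. destruct (constructive_indefinite_description _ (Ht t)) as [s [Hs1 Hs2]].
      simpl. apply Hs2. intros z [h [Dh ->]]. apply Hu; auto.
Qed.

Theorem mainTheorem6 (B : OrderedFunctor) (cf : CofreeComonad B)
  (S : Functor) (m : FreeMonad S)
  (Hdcpo : pointed_dcpo (B (Sstar m Empty_set)) (@ord B (Sstar m Empty_set)))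
  (rho : biGSOS S cf m) (Hnat : natural rho) (Hmono : monotone_spec rho) :
  exists f : Sstar m Empty_set -> B (Sstar m Empty_set),
    supported_model rho f /\
    forall g : Sstar m Empty_set -> B (Sstar m Empty_set),
      supported_model rho g ->
      forall t : Sstar m Empty_set, ord B (f t) (g t).
Proof.
  set (X := Sstar m Empty_set).
  set (out := fold m (A := S X) (fun u => fmap S (iota m) u)
                (fun e : Empty_set => match e with end)).
  assert (iota_out : forall t, iota m (out t) = t).
  { intros t.
    transitivity (fold m (A := X) (fun u => iota m u) (fun e : Empty_set => match e with end) t).
    - apply (fold_unique _ m Empty_set X (fun u => iota m u) (fun e : Empty_set => match e with end)
               (fun t => iota m (out t))).
      + intros s. unfold out. rewrite fold_iota. rewrite <- fmap_comp. reflexivity.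
      + intros [].
    - symmetry. apply (fold_unique _ m Empty_set X (fun u => iota m u) (fun e : Empty_set => match e with end)
               (fun t => t)).
      + intros s. rewrite fmap_id. reflexivity.
      + intros []. }
  assert (out_iota : forall s, out (iota m s) = s).
  { intros s. unfold out at 1. rewrite fold_iota. fold out. rewrite <- fmap_comp.
    transitivity (fmap S (fun x : X => x) s); [|apply fmap_id].
    f_equal. apply functional_extensionality. apply iota_out. }
  set (Phi := fun (f : X -> B X) (t : X) =>
        fmap B (mu m) (rho X (fmap S (coinf cf f) (out t)))).
  assert (sim : forall f g : X -> B X, (forall t, ord B (f t) (g t)) ->
            forall x, sim_Binf B cf X (coinf cf f x) (coinf cf g x)).
  { intros f g Hfg x.
    exists (fun a b => exists x, a = coinf cf f x /\ b = coinf cf g x).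
    split; [|eauto].
    intros a b [y [-> ->]].
    unfold coinf. rewrite !unfold_theta, !unfold_eps. simpl. fold (coinf cf f). fold (coinf cf g).
    exists (fmap B (coinf cf f) (g y), y), (fmap B (coinf cf g) (g y), y).
    split; [|split].
    - split; simpl; auto. apply fmap_mono. auto.
    - exists (fmap B (fun z => exist (fun p : Binf cf X * Binf cf X =>
                     exists x, fst p = coinf cf f x /\ snd p = coinf cf g x)
                     (coinf cf f z, coinf cf g z) (ex_intro _ z (conj eq_refl eq_refl))) (g y), y).
      unfold BX_map; simpl. split; f_equal; rewrite <- fmap_comp; reflexivity.
    - split; simpl; auto. apply (ord_preorder B). }
  assert (Phimono : forall f g : X -> B X, (forall t, ord B (f t) (g t)) ->
            forall t, ord B (Phi f t) (Phi g t)).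
  { intros f g Hfg t. unfold Phi. apply fmap_mono. apply Hmono.
    exists (fmap S (fun z => exist (fun p : Binf cf X * Binf cf X =>
               sim_Binf B cf X (fst p) (snd p))
               (coinf cf f z, coinf cf g z) (sim f g Hfg z)) (out t)).
    split; rewrite <- fmap_comp; reflexivity. }
  assert (supp : forall f, supported_model rho f <-> Phi f = f).
  { intros f. split.
    - intros Hf. apply functional_extensionality. intros t. unfold Phi.
      rewrite <- (iota_out t) at 2. rewrite Hf. reflexivity.
    - intros Hf s. change (f (iota m s) = fmap B (mu m) (rho X (fmap S (coinf cf f) s))).
      rewrite <- (out_iota s) at 2. exact (eq_sym (f_equal (fun h => h (iota m s)) Hf)). }
  destruct (pataraia (X -> B X) (fun f g => forall t, ord B (f t) (g t))
              (pointwise_dcpo X _ _ Hdcpo) Phi Phimono) as [f [Hf Hl]].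
  exists f. split.
  - apply supp; auto.
  - intros g Hg. apply Hl. apply supp in Hg. rewrite Hg. intros t.
    apply (ord_preorder B).
Qed.
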